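(* Let $G$ be a finite simple graph that has a $C_3$-free vertex $x$ (i.e. $x$ is non-isolated and lies in no triangle of $G$). Then $G$ is not a universal fixer; that is, there exists a permutation $\pi$ of $V(G)$ such that $\gamma(\pi G)\neq\gamma(G)$.
   Context: For a graph $G$, a set $D\subseteq V(G)$ is dominating if every vertex not in $D$ has a neighbor in $D$; $\gamma(G)$ is the minimum size of a dominating set. Let $G'$ be a disjoint copy of $G$, the copy of $v\in V(G)$ being denoted $v'$. For a bijection $\pi:V(G)\to V(G')$ (equivalently a permutation of $V(G)$), the prism $\pi G$ is the graph with vertex set $V(G)\cup V(G')$ and edge set $E(G)\cup E(G')\cup\{u\pi(u):u\in V(G)\}$. The graph $G$ is a universal fixer if $\gamma(\pi G)=\gamma(G)$ for every bijection $\pi:V(G)\to V(G')$. A non-isolated vertex is $C_3$-free if it belongs to no triangle of $G$. *)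

(* Defs.v *)
From mathcomp Require Import all_boot all_fingroup.
Set Implicit Arguments. Unset Strict Implicit. Unset Printing Implicit Defensive.

Definition simple_graph (V : finType) (adj : rel V) : Prop :=
  symmetric adj /\ irreflexive adj.

Definition dominating (V : finType) (adj : rel V) (D : {set V}) : bool :=
  [forall v, (v \notin D) ==> [exists u in D, adj v u]].

(* Domination number: minimum size of a dominating set (setT is always one,
   so the default #|V| is never smaller than the true minimum). *)
Definition gamma (V : finType) (adj : rel V) : nat :=
  \big[minn/#|V|]_(D : {set V} | dominating adj D) #|D|.

(* The prism pi G on V(G) + V(G'): inl v is v, inr v is the copy v'. *)
Definition prism (T : finType) (e : rel T) (p : {perm T}) : rel (T + T) :=
  fun a b =>
    match a, b with
    | inl u, inl v => e u v
    | inr u, inr v => e u v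
    | inl u, inr w => w == p u
    | inr w, inl u => w == p u
    end.

Definition C3_free (T : finType) (e : rel T) (x : T) : Prop :=
  (exists y, e x y) /\ ~ (exists y z, [&& e x y, e y z & e x z]).

Definition universal_fixer (T : finType) (e : rel T) : Prop :=
  forall p : {perm T}, gamma (prism e p) = gamma e.

(* Main.v *)
Require Import Defs.
From mathcomp Require Import all_boot all_fingroup.
From mathcomp Require Import zify.
Set Implicit Arguments. Unset Strict Implicit. Unset Printing Implicit Defensive.

Lemma big_minn_le (I : eqType) (r : seq I) (P : pred I) (F : I -> nat) n i :
  i \in r -> P i -> \big[minn/n]_(j <- r | P j) F j <= F i.
Proof.
elim: r => // a r IH; rewrite inE big_cons => /orP[/eqP<- ->|ir Pi].
  exact: geq_minl.
case: (P a); last exact: IH.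
exact: leq_trans (geq_minr _ _) (IH ir Pi).
Qed.

Lemma big_minn_attain (I : eqType) (r : seq I) (P : pred I) (F : I -> nat) n :
  \big[minn/n]_(j <- r | P j) F j = n \/
  exists2 i, P i & \big[minn/n]_(j <- r | P j) F j = F i.
Proof.
elim: r => [|a r IH]; first by left; rewrite big_nil.
rewrite big_cons; case Pa: (P a) => //.
case: IH => [-> | [i Pi ->]]; rewrite /minn; case: ifP => _.
- by right; exists a.
- by left.
- by right; exists a.
- by right; exists i.
Qed.

Lemma gamma_le (V : finType) (adj : rel V) (D : {set V}) :
  dominating adj D -> gamma adj <= #|D|.
Proof.
move=> dD; rewrite /gamma; apply: big_minn_le => //; exact: mem_index_enum.
Qed.

Lemma gamma_attain (V : finType) (adj : rel V) :
  gamma adj = #|V| \/ exists2 D : {set V}, dominating adj D & gamma adj = #|D|.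
Proof. rewrite /gamma; exact: big_minn_attain. Qed.

Lemma key (T : finType) (e : rel T) (X Y : {set T}) :
  irreflexive e -> #|X| + #|Y| <= gamma e ->
  (forall w, w \notin X -> w \notin Y -> exists2 u, e w u & u \in X) ->
  forall v, v \in Y -> v \notin X /\ (forall u, e v u -> u \notin X /\ u \notin Y).
Proof.
move=> irr hle hdom v vY.
set S := X :|: Y.
have domS : dominating e S.
  apply/forallP => w; apply/implyP; rewrite in_setU negb_or => /andP[wX wY].
  have [u wu uX] := hdom w wX wY.
  by apply/existsP; exists u; rewrite in_setU uX wu.
have gS := gamma_le domS.
have cS : #|S| = #|X| + #|Y| - #|X :&: Y| by rewrite cardsU.
have cI : #|X :&: Y| <= #|X| by apply: subset_leq_card; apply: subsetIl.
have vX : v \notin X.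
  apply/negP => vX.
  have : 0 < #|X :&: Y| by apply/card_gt0P; exists v; rewrite in_setI vX vY.
  lia.
split => // u vu.
have vS : v \in S by rewrite in_setU vY orbT.
have cD := cardsD1 v S; rewrite vS in cD.
have domS' : ~~ ((u \in X) || (u \in Y)) -> False -> False by [].
apply/andP; rewrite -negb_or; apply/negP => uXY.
have domS2 : dominating e (S :\ v).
  apply/forallP => w; apply/implyP; rewrite in_setD1 negb_and negbK.
  case/orP => [/eqP -> | wS].
    apply/existsP; exists u; rewrite in_setD1 in_setU uXY vu !andbT.
    by apply/eqP => uv; move: vu; rewrite uv irr.
  move: wS; rewrite in_setU negb_or => /andP[wX wY].
  have [u' wu uX] := hdom w wX wY.
  apply/existsP; exists u'; rewrite in_setD1 in_setU uX wu /=.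
  have -> : u' != v by apply/eqP => uv; move: vX; rewrite -uv uX.
  by [].
have := gamma_le domS2. lia.
Qed.
Lemma comb (T : finType) (e : rel T) (x : T) (P A : pred T) :
  symmetric e -> irreflexive e -> C3_free e x ->
  (forall v, A v -> ~~ P v /\ forall u, e v u -> ~~ P u && ~~ A u) ->
  (forall v, P v -> ~~ A v /\ forall u,
      e (next (x :: [seq v <- enum T | e x v]) v)
        (next (x :: [seq v <- enum T | e x v]) u) -> ~~ P u && ~~ A u) ->
  (forall v, ~~ P v -> ~~ A v -> exists2 u, e v u & P u) ->
  (forall v, ~~ P v -> ~~ A v -> exists2 u,
      e (next (x :: [seq v <- enum T | e x v]) v)
        (next (x :: [seq v <- enum T | e x v]) u) & A u) ->
  False.
Proof.
move=> sym irr [[y0 xy0] notri] H1 H1' H3 H3'.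
set ys := [seq v <- enum T | e x v] in H1' H3'.
set s := x :: ys in H1' H3'.
set pi := next s in H1' H3'.
set k := size ys.
have tri : forall a b, e x a -> e a b -> e x b -> False.
  by move=> a b xa ab xb; apply: notri; exists a, b; rewrite xa ab xb.
have memys : forall v, (v \in ys) = e x v.
  by move=> v; rewrite mem_filter mem_enum andbT.
have Us : uniq s.
  rewrite /s /= memys irr /=; apply: filter_uniq; exact: enum_uniq.
have memS : forall v, (v \in s) = (v == x) || e x v.
  by move=> v; rewrite inE memys.
have k0 : 0 < k.
    by rewrite /k lt0n size_eq0; apply/negP => /eqP ys0; move: (memys y0); rewrite ys0 xy0 in_nil.
have pinj : injective pi by apply: (can_inj (prev_next Us)).
have F0 : pi x = nth x ys 0 by rewrite /pi next_nth memS eqxx /= eqxx.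
have F1 : forall j, j < k -> pi (nth x ys j) = nth x ys j.+1.
  move=> j jk; have jm : nth x ys j \in ys by apply: mem_nth.
  rewrite /pi next_nth memS -memys jm orbT /=.
  have -> : (x == nth x ys j) = false.
    by apply/negP => /eqP xn; move: jm; rewrite -xn memys irr.
  by rewrite index_uniq //; move: Us => /andP[].
have F2 : forall j, j < k -> e x (nth x ys j).
  by move=> j jk; rewrite -memys; apply: mem_nth.
have F3 : forall y, e x y -> exists2 j, j < k & y = nth x ys j.
  move=> y xy; exists (index y ys); first by rewrite index_mem memys.
  by rewrite nth_index // memys.
have F4 : forall v, v != x -> ~~ e x v -> pi v = v.
  move=> v vx xv; rewrite /pi next_nth memS (negbTE vx) (negbTE xv) //.
have F5 : forall v, v \in s -> pi v \in s by move=> v vs; rewrite /pi mem_next.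
have F6 : nth x ys k = x by rewrite nth_default.
have Flast : pi (nth x ys k.-1) = x by rewrite F1 ?prednK // ltn_predL.
have KeyL : forall z, ~~ P x -> e x (pi z) -> ~~ P (pi z) && ~~ A (pi z) ->
    ~~ P z && ~~ A z.
  move=> z nPx exz /andP[nP nA]; have [w zw Pw] := H3 _ nP nA.
  have wx : w != x by apply/eqP => wx; move: nPx; rewrite -wx Pw.
  have nxw : ~~ e x w by apply/negP => xw; exact: tri exz zw xw.
  have [_ H] := H1' w Pw; apply: H; by rewrite (F4 _ wx nxw) sym.
case Px: (P x).
  have [_ Hx] := H1' x Px.
  have Oz := Hx (nth x ys k.-1); rewrite Flast F0 sym F2 // in Oz.
  have /andP[nPz nAz] := Oz isT.
  have [u ezu Au] := H3' _ nPz nAz; rewrite Flast in ezu.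
  have [nPu Hu] := H1 u Au.
  have : u \in s.
    apply/negPn/negP => us; move: ezu; rewrite F4.
      by move=> xu; move: us; rewrite memS xu orbT.
      by apply/negP => /eqP ux; move: us; rewrite ux memS eqxx.
    by apply/negP => xu; move: us; rewrite memS xu orbT.
  rewrite memS => /orP[/eqP ux | xu]; first by move: nPu; rewrite ux Px.
  by have := Hu x; rewrite sym xu Px => /(_ isT).
case Ax: (A x).
  have [_ Hx] := H1 x Ax.
  have := KeyL x (negbT Px); rewrite F0 F2 // Hx ?F2 // => /(_ isT isT).
  by rewrite Ax andbF.
have [y xy Py] := H3 x (negbT Px) (negbT Ax).
have [j jk yj] := F3 y xy.
have [_ Hy] := H1' y Py.
case: (ltngtP j k.-1) => [jlt | jgt | jeq]; last first.
- (* j = k.-1 *)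
  have piy : pi y = x by rewrite yj jeq Flast.
  set z := prev s y.
  have piz : pi z = y by rewrite /pi /z next_prev.
  have := Hy z; rewrite piz piy xy => /(_ isT) /andP[nPz nAz].
  have [u ezu Au] := H3' _ nPz nAz; rewrite piz in ezu.
  have [nPu Hu] := H1 u Au.
  case us : (u \in s).
    have := F5 _ us; rewrite memS => /orP[/eqP pux | xpu].
      by move: pux; rewrite -piy => /pinj uy; move: nPu; rewrite uy Py.
    exact: tri xy ezu xpu.
  have ux : u != x by apply/eqP => ux; move: us; rewrite ux memS eqxx.
  have nxu : ~~ e x u by apply/negP => xu; move: us; rewrite memS xu orbT.
  rewrite (F4 _ ux nxu) in ezu.
  by have := Hu y; rewrite sym ezu Py => /(_ isT).
- lia.
- (* j < k.-1 *)
  have k1 : j.+1 < k by lia.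
  have Ok : ~~ P (nth x ys k.-1) && ~~ A (nth x ys k.-1).
    apply: Hy; rewrite yj F1 // Flast sym; exact: F2.
  have ind : forall d, j + d < k -> ~~ (~~ P (nth x ys (j + d)) && ~~ A (nth x ys (j + d))).
    elim => [|d IH] jd; first by rewrite addn0 -yj Py.
    have jd' : j + d < k by lia.
    apply/negP => Od; move/negP: (IH jd'); apply; apply: KeyL; first by rewrite Px.
      by rewrite F1 // -addnS; apply: F2.
    by rewrite F1 // -addnS.
  have := ind (k.-1 - j); rewrite subnKC ?Ok //; last lia.
  by move=> /(_ ltac:(lia)).
Qed.
Lemma main (T : finType) (e : rel T) (x : T) :
  simple_graph e -> C3_free e x ->
  exists p : {perm T}, gamma (prism e p) <> gamma e.
Proof.
move=> [sym irr] C3.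
set ys := [seq v <- enum T | e x v].
set s := x :: ys.
have Us : uniq s.
  rewrite /s /= mem_filter irr /=; apply: filter_uniq; exact: enum_uniq.
set p := perm (can_inj (prev_next Us)).
have pE : forall v, p v = next s v by move=> v; rewrite permE.
exists p => Heq.
have gT : gamma e <= #|T|.
  have -> : #|T| = #|[set: T]| by rewrite cardsT.
  apply: gamma_le; apply/forallP => v; by rewrite in_setT.
case: (gamma_attain (prism e p)) => [hc | [D domD hD]].
  move: gT; rewrite -Heq hc card_sum.
  have : 0 < #|T| by apply/card_gt0P; exists x.
  lia.
set D1 := [set v | inl v \in D].
set D2 := [set v | inr v \in D].
set Aset := [set v | inr (p v) \in D].
set Bset := [set w | inl ((p^-1)%g w) \in D].
have cD : #|D1| + #|D2| <= #|D|.
  have c1 : #|[set (inl v : T + T) | v in D1]| = #|D1|.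
    by apply: card_imset => a b [].
  have c2 : #|[set (inr v : T + T) | v in D2]| = #|D2|.
    by apply: card_imset => a b [].
  have dis : [set (inl v : T + T) | v in D1] :&: [set (inr v : T + T) | v in D2] = set0.
    apply/setP => z; rewrite !inE; apply/negP => /andP[/imsetP[a _ ->] /imsetP[b _]] //.
  have sub : [set (inl v : T + T) | v in D1] :|: [set (inr v : T + T) | v in D2] \subset D.
    apply/subsetP => z; rewrite in_setU => /orP[/imsetP[a] | /imsetP[a]];
      by rewrite inE => ? ->.
  have := subset_leq_card sub; rewrite cardsU dis cards0 c1 c2; lia.
have cA : #|Aset| = #|D2|.
  rewrite -(@card_preimset _ (fun_of_perm p) D2 (@perm_inj _ p)) /=; apply: eq_card => v.
  by rewrite !inE.
have cB : #|Bset| = #|D1|.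
  rewrite -(@card_preimset _ (fun_of_perm (p^-1)%g) D1 (@perm_inj _ (p^-1)%g)); apply: eq_card => v.
  by rewrite !inE.
have dom1 : forall w, w \notin D1 -> w \notin Aset -> exists2 u, e w u & u \in D1.
  move=> w; rewrite !inE => wD1 wA.
  have /existsP[b /andP[bD wb]] := implyP (forallP domD (inl w)) wD1.
  case: b bD wb => u bD /= wb; first by exists u; rewrite // inE.
  by move: wA; rewrite -(eqP wb) bD.
have dom2 : forall w, w \notin D2 -> w \notin Bset -> exists2 u, e w u & u \in D2.
  move=> w; rewrite !inE => wD2 wB.
  have /existsP[b /andP[bD wb]] := implyP (forallP domD (inr w)) wD2.
  case: b bD wb => u bD /= wb; last by exists u; rewrite // inE.
  by move: wB; rewrite (eqP wb) permK bD.
have k1 := @key T e D1 Aset irr ltac:(lia) dom1.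
have k2 := @key T e D2 Bset irr ltac:(lia) dom2.
apply: (comb (P := fun v => inl v \in D) (A := fun v => inr (p v) \in D) sym irr C3).
- move=> v Av; have vA : v \in Aset by rewrite inE.
  have [h1 h2] := k1 v vA.
  split; first by move: h1; rewrite inE.
  by move=> u vu; have [h3 h4] := h2 u vu; move: h3 h4; rewrite !inE => -> ->.
- move=> v Pv; have vB : p v \in Bset by rewrite inE permK.
  have [h1 h2] := k2 (p v) vB.
  split; first by move: h1; rewrite inE.
  move=> u; rewrite -!pE => vu; have [h3 h4] := h2 _ vu.
  by move: h3 h4; rewrite !inE permK => -> ->.
- move=> v nP nA; have a1 : v \notin D1 by rewrite inE.
  have a2 : v \notin Aset by rewrite inE.
  have [u vu uD] := dom1 v a1 a2.
  by exists u => //; move: uD; rewrite inE.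
- move=> v nP nA.
  have a1 : p v \notin D2 by rewrite inE.
  have a2 : p v \notin Bset by rewrite inE permK.
  have [u vu uD] := dom2 (p v) a1 a2.
  exists ((p^-1)%g u); rewrite -?pE -/ys -/s -?pE permKV //.
  by move: uD; rewrite inE.
Qed.

Theorem theorem2 (T : finType) (e : rel T) (x : T) :
  simple_graph e -> C3_free e x ->
  ~ universal_fixer e /\ (exists p : {perm T}, gamma (prism e p) <> gamma e).
Proof.
move=> Hs Hc; have [p hp] := main Hs Hc.
split; last by exists p.
by move=> U; apply: hp; apply: U.
Qed.
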